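(* Let $n,k\ge1$ and let $x_1,\dots,x_j$ be distinct nodes of $\Gamma_{2^n}$ such that the subgraph of $\Gamma_{2^n}$ induced on $\{x_1,\dots,x_j\}$ is exactly the directed cycle $x_1\to x_2\to\cdots\to x_j\to x_1$. Then the subgraph of $\Gamma_{2^{n+k-1}}$ induced on $\overline{H}_{M_k}^{-1}(\{x_1,\dots,x_j\})$ is a disjoint union of directed cycles.
   Context: $T(x)=x/2$ for $x$ even, $T(x)=(3x+1)/2$ for $x$ odd, extended to $\mathbb{Z}_2$; $T_0(x)=x/2$, $T_1(x)=(3x+1)/2$. $\Gamma_d$ is the directed graph on $\mathbb{Z}/d\mathbb{Z}$ with a black arrow $r\to s$ iff there exist positive integers $x\equiv r$, $y\equiv s\pmod d$ with $x$ even and $T_0(x)=y$, and a red arrow $r\to s$ iff there exist such $x,y$ with $x$ odd and $T_1(x)=y$. The parity vector map $\Phi^{-1}:\mathbb{Z}_2\to\mathbb{Z}_2$ is $\Phi^{-1}(x)=\sum_{i\ge0}(T^i(x)\bmod 2)2^i$; it is a bijection with inverse $\Phi$. For $k\ge1$, $M_k(\sum_i a_i2^i)=\sum_i m_i2^i$ with $m_i\equiv a_i+\cdots+a_{i+k-1}\pmod2$, and $H_{M_k}=\Phi\circ M_k\circ\Phi^{-1}$, which commutes with $T$. The residue of $H_{M_k}(x)$ mod $2^n$ depends only on $x$ mod $2^{n+k-1}$; $\overline{H}_{M_k}:\mathbb{Z}/2^{n+k-1}\mathbb{Z}\to\mathbb{Z}/2^n\mathbb{Z}$ is the induced map. *)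

(* Defs.v *)
From mathcomp Require Import all_boot.
Set Implicit Arguments. Unset Strict Implicit. Unset Printing Implicit Defensive.

(* black arrow r -> s : positive x = r, y = s (mod d), x even, T_0 x = x/2 = y
   red   arrow r -> s : positive x = r, y = s (mod d), x odd, T_1 x = (3x+1)/2 = y *)
Definition gamma_black (d r s : nat) : Prop :=
  exists x y, 0 < x /\ 0 < y /\ x %% d = r %% d /\ y %% d = s %% d /\
              ~~ odd x /\ x./2 = y.
Definition gamma_red (d r s : nat) : Prop :=
  exists x y, 0 < x /\ 0 < y /\ x %% d = r %% d /\ y %% d = s %% d /\
              odd x /\ (3 * x + 1)./2 = y.
Definition gamma_edge (d r s : nat) : Prop := gamma_black d r s \/ gamma_red d r s.

(* x : nat -> nat represents the 2-adic integer with x m = (x mod 2^m). *)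
Definition padic (x : nat -> nat) : Prop :=
  forall m, x m < 2 ^ m /\ x m.+1 %% 2 ^ m = x m.

Definition Tz (x : nat -> nat) : nat -> nat := fun m =>
  if odd (x 1) then ((3 * x m.+1 + 1) %% 2 ^ m.+1)./2 else (x m.+1)./2.

Definition zbit (a : nat -> nat) (i : nat) : bool := odd (a i.+1 %/ 2 ^ i).

Definition phiinv (x : nat -> nat) : nat -> nat := fun m =>
  \sum_(i < m) (odd (iter i Tz x 1)) * 2 ^ i.

Definition Mk (k : nat) (a : nat -> nat) : nat -> nat := fun m =>
  \sum_(i < m) ((\sum_(l < k) zbit a (i + l)) %% 2) * 2 ^ i.

(* Hbar_{M_k} : Z/2^(n+k-1) -> Z/2^n, given relationally:
   Hbar r = s  iff  some 2-adic x = r (mod 2^(n+k-1)) has H_{M_k}(x) = s (mod 2^n),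
   where H_{M_k}(x) = y  iff  Phi^{-1}(y) = M_k(Phi^{-1}(x)). *)
Definition Hbar_rel (n k r s : nat) : Prop :=
  exists x y, padic x /\ padic y /\ x (n + k - 1) = r /\ y n = s /\
              (forall m, phiinv y m = Mk k (phiinv x) m).

Definition induced_is_cycle (T : eqType) (E : T -> T -> Prop) (xs : seq T) : Prop :=
  forall u v, u \in xs -> v \in xs -> (E u v <-> v = next xs u).

Definition induced_disjoint_cycles (T : eqType) (E : T -> T -> Prop) (S : T -> Prop) : Prop :=
  exists cs : seq (seq T),
    all (fun c => c != [::]) cs /\ uniq (flatten cs) /\
    (forall v, S v <-> v \in flatten cs) /\
    (forall u v, S u -> S v ->
       (E u v <-> exists2 c, c \in cs & u \in c /\ v = next c u)).

(* Main.v *)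
Require Import Defs.
From mathcomp Require Import all_boot zify.
Set Implicit Arguments. Unset Strict Implicit. Unset Printing Implicit Defensive.

Definition Tn (a : nat) : nat := if odd a then (3 * a + 1)./2 else a./2.
Definition Q (a i : nat) : bool := odd (iter i Tn a).

Lemma QS a i : Q a i.+1 = Q (Tn a) i.
Proof. by rewrite /Q iterSr. Qed.
Lemma Q0 a : Q a 0 = odd a. Proof. by []. Qed.

Lemma odd_mod2M c M : odd (c %% (M * 2)) = odd c.
Proof. by move: (modn_dvdm c (dvdn_mull M (dvdnn 2))); rewrite !modn2; do 2 case: odd. Qed.

Lemma half_mod c M : (c %% (M * 2))./2 = c./2 %% M.
Proof. by rewrite -!divn2 modn_divl. Qed.

Lemma half_modE c d M : odd c = odd d -> c./2 %% M = d./2 %% M ->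
  c %% (M * 2) = d %% (M * 2).
Proof.
move=> Ho Hh.
rewrite -[c %% _]odd_double_half -[d %% _]odd_double_half.
by rewrite !odd_mod2M !half_mod Ho Hh.
Qed.

Lemma odd_eq_mod c d M : c %% (M * 2) = d %% (M * 2) -> odd c = odd d.
Proof. by move=> H; rewrite -(odd_mod2M c M) H odd_mod2M. Qed.

Lemma L1 a b M : a %% (M * 2) = b %% (M * 2) -> Tn a %% M = Tn b %% M.
Proof.
move=> H; have Ho := odd_eq_mod H.
rewrite /Tn -Ho; case: (odd a).
  rewrite -!half_mod; congr (_./2).
  by rewrite -modnDml -modnMmr H modnMmr modnDml.
by rewrite -!half_mod H.
Qed.

Lemma cancel3 a b j : 3 * a = 3 * b %[mod 2 ^ j] -> a = b %[mod 2 ^ j].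
Proof.
have cop : coprime (2 ^ j) 3 by apply: coprimeXl.
wlog le : a b / b <= a.
  move=> W; case: (leqP b a) => h; first exact: W.
  by move=> /esym H; apply/esym; apply: W => //; apply: ltnW.
move=> /eqP; rewrite eqn_mod_dvd ?leq_mul2l ?le // -mulnBr Gauss_dvdr //.
by rewrite -eqn_mod_dvd // => /eqP.
Qed.

Lemma L2 a b j : odd a = odd b -> Tn a %% 2 ^ j = Tn b %% 2 ^ j ->
  a %% 2 ^ j.+1 = b %% 2 ^ j.+1.
Proof.
move=> Ho; rewrite /Tn -Ho expnSr; case oa: (odd a) => H.
  have : (3 * a + 1) %% (2 ^ j * 2) = (3 * b + 1) %% (2 ^ j * 2).
    apply: half_modE => //.
    by rewrite !oddD Ho.
  move/eqP; rewrite eqn_modDr => /eqP; rewrite -expnSr => /cancel3.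
  by rewrite expnSr.
by apply: half_modE.
Qed.

Lemma QE m a b : (forall i, i < m -> Q a i = Q b i) <-> a %% 2 ^ m = b %% 2 ^ m.
Proof.
elim: m a b => [|m IH] a b; first by rewrite !modn1; split.
split.
  move=> H; apply: L2; first by have := H 0 isT.
  by apply/IH => i lt; rewrite -!QS; apply: H.
move=> H; case=> [_|i lt]; first by rewrite !Q0; apply: (@odd_eq_mod _ _ (2 ^ m)); rewrite -expnSr; exact H.
rewrite !QS; apply: (proj2 (IH (Tn a) (Tn b))) => //; apply: (@L1 _ _ (2 ^ m)); rewrite -expnSr; exact H.
Qed.

Lemma Qexists m (b : nat -> bool) : exists2 a, a < 2 ^ m & forall i, i < m -> Q a i = b i.
Proof.
pose F (a : 'I_(2 ^ m)) : {ffun 'I_m -> bool} := [ffun i : 'I_m => Q a i].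
have injF : injective F.
  move=> x y /ffunP Hxy; apply: val_inj => /=.
  rewrite -(modn_small (ltn_ord x)) -(modn_small (ltn_ord y)).
  apply/QE => i lt; have := Hxy (Ordinal lt); by rewrite !ffunE.
have cardF : #|{ffun 'I_m -> bool}| <= #|'I_(2 ^ m)|.
  by rewrite card_ffun card_bool !card_ord.
have := inj_card_onto injF cardF [ffun i : 'I_m => b i].
case/codomP => a Ha; exists a => // i lt.
have := congr1 (fun g : {ffun 'I_m -> bool} => g (Ordinal lt)) Ha; by rewrite /F !ffunE /= => ->.
Qed.

Lemma P1 x : padic x -> forall m p, m <= p -> x p %% 2 ^ m = x m.
Proof.
move=> px m; elim=> [|p IH]; first by rewrite leqn0 => /eqP ->; rewrite modn1 ; case: (px 0); rewrite expn0 ltnS leqn0 => /eqP.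
rewrite leq_eqVlt => /orP[/eqP ->|lt]; first by rewrite modn_small //; case: (px p.+1).
rewrite ltnS in lt; rewrite -(IH lt); case: (px p) => _ <-; by rewrite modn_dvdm // dvdn_exp2l.
Qed.

Lemma odd_mod2 c : odd (c %% 2) = odd c.
Proof. by have := odd_mod2M c 1; rewrite mul1n. Qed.

Lemma Q_mod a m i : i < m -> Q (a %% 2 ^ m) i = Q a i.
Proof. by move=> lt; apply/(proj2 (QE m _ _)) => //; rewrite modn_mod. Qed.

Lemma Tz_val x m : padic x -> Tz x m = Tn (x m.+1) %% 2 ^ m.
Proof.
move=> px; rewrite /Tz /Tn.
have -> : odd (x 1) = odd (x m.+1) by rewrite -(P1 px (leq0n m : 1 <= m.+1)) odd_mod2.
have xlt : x m.+1 < 2 ^ m * 2 by rewrite -expnSr; case: (px m.+1).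
case: (odd _); first by rewrite expnSr half_mod.
by rewrite -{1}(modn_small xlt) half_mod.
Qed.

Lemma Q_iter a i l : Q (iter i Tn a) l = Q a (i + l).
Proof. by rewrite /Q -iterD addnC. Qed.

Lemma Liter a b i j : a %% 2 ^ (i + j) = b %% 2 ^ (i + j) ->
  iter i Tn a %% 2 ^ j = iter i Tn b %% 2 ^ j.
Proof.
move=> H; apply/QE => l lt; rewrite !Q_iter.
by apply/(proj2 (QE (i + j) a b)) => //; rewrite ltn_add2l.
Qed.

Lemma Tz_padic x : padic x -> padic (Tz x).
Proof.
move=> px m; rewrite !Tz_val //; split; first by rewrite ltn_pmod ?expn_gt0.
rewrite modn_dvdm ?dvdn_exp2l //.
apply: (@L1 _ _ (2 ^ m)); rewrite -expnSr; case: (px m.+1) => lt ->.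
by rewrite modn_small.
Qed.

Lemma P3 i : forall x, padic x -> padic (iter i Tz x) /\
  forall j, iter i Tz x j = iter i Tn (x (i + j)) %% 2 ^ j.
Proof.
elim: i => [|i IH] x px.
  by split => // j; rewrite modn_small //; case: (px j).
have [p1 p2] := IH _ (Tz_padic px).
rewrite iterSr; split => // j; rewrite p2 Tz_val //.
rewrite iterSr addSn; apply: Liter; by rewrite modn_mod.
Qed.

Lemma Pdig x i m : padic x -> i < m -> odd (iter i Tz x 1) = Q (x m) i.
Proof.
move=> px lt; have [_ p2] := P3 i px; rewrite p2 odd_mod2.
rewrite addn1 -(P1 px lt); exact: (Q_mod (x m) (ltnSn i)).
Qed.

Definition emb (r : nat) : nat -> nat := fun m => r %% 2 ^ m.
Lemma emb_padic r : padic (emb r).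
Proof.
move=> m; split; first by rewrite ltn_pmod ?expn_gt0.
by rewrite /emb modn_dvdm // dvdn_exp2l.
Qed.

Definition phi (b : nat -> bool) (m : nat) : nat :=
  if [pick a : 'I_(2 ^ m) | [forall i : 'I_m, Q a i == b i]] is Some a then val a else 0.

Lemma phi_spec b m : phi b m < 2 ^ m /\ forall i, i < m -> Q (phi b m) i = b i.
Proof.
rewrite /phi; case: pickP => [a /forallP H|none].
  by split => [|i lt]; [exact: ltn_ord | have := H (Ordinal lt); move/eqP].
have [a alt Ha] := Qexists m b; have := none (Ordinal alt).
by move/negbT/forallPn => [i]; rewrite /= Ha // eqxx.
Qed.

Lemma phi_uniq b m s : s < 2 ^ m -> (forall i, i < m -> Q s i = b i) -> s = phi b m.
Proof.
move=> lt H; have [l2 H2] := phi_spec b m.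
rewrite -(modn_small lt) -(modn_small l2); apply/QE => i li.
by rewrite H // H2.
Qed.

Lemma phi_padic b : padic (phi b).
Proof.
move=> m; have [l1 _] := phi_spec b m; split => //.
have [l2 H2] := phi_spec b m.+1.
apply: phi_uniq; first by rewrite ltn_pmod ?expn_gt0.
by move=> i lt; rewrite Q_mod // H2 // ltnW.
Qed.

Lemma phi_dig b i : odd (iter i Tz (phi b) 1) = b i.
Proof.
rewrite (Pdig (phi_padic b) (ltnSn i)).
by have [_ H] := phi_spec b i.+1; rewrite H.
Qed.

Lemma bin_lt (b : nat -> bool) m : \sum_(i < m) b i * 2 ^ i < 2 ^ m.
Proof.
elim: m => [|m IH]; first by rewrite big_ord0.
rewrite big_ord_recr /= expnS mul2n -addnn.
apply: leq_trans (_ : 2 ^ m + b m * 2 ^ m <= _).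
  by rewrite ltn_add2r.
by rewrite leq_add2l; case: (b m); rewrite ?mul1n ?mul0n.
Qed.

Lemma bin_digit (b : nat -> bool) j : odd ((\sum_(i < j.+1) b i * 2 ^ i) %/ 2 ^ j) = b j.
Proof.
rewrite big_ord_recr /= addnC divnMDl ?expn_gt0 // divn_small ?bin_lt // addn0.
by case: (b j).
Qed.

Lemma bin_inj (b c : nat -> bool) :
  (forall m, \sum_(i < m) b i * 2 ^ i = \sum_(i < m) c i * 2 ^ i) -> forall j, b j = c j.
Proof. by move=> H j; rewrite -bin_digit H bin_digit. Qed.

Definition X (k r i : nat) : bool := odd (\sum_(l < k) Q r (i + l)).

Lemma zbit_phiinv x j : zbit (phiinv x) j = odd (iter j Tz x 1).
Proof. exact: (bin_digit (fun i => odd (iter i Tz x 1))). Qed.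

Lemma Mk_phiinv k x m : Mk k (phiinv x) m =
  \sum_(i < m) odd (\sum_(l < k) odd (iter (i + l) Tz x 1)) * 2 ^ i.
Proof.
apply: eq_bigr => i _; rewrite modn2; congr (nat_of_bool (odd _) * _).
by apply: eq_bigr => l _; rewrite zbit_phiinv.
Qed.

Lemma Hbar_iff n k r s : 0 < n -> 0 < k -> r < 2 ^ (n + k - 1) -> s < 2 ^ n ->
  Hbar_rel n k r s <-> s = phi (X k r) n.
Proof.
move=> n0 k0 rlt slt; split.
  case=> x [y [px [py [xr [ys H]]]]].
  have Hb := @bin_inj (fun i => odd (iter i Tz y 1))
    (fun i => odd (\sum_(l < k) odd (iter (i + l) Tz x 1)))
    (fun m => etrans (H m) (Mk_phiinv k x m)).
  apply: phi_uniq => // i lt; rewrite -ys -(Pdig py lt) Hb /X.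
  congr (odd _); apply: eq_bigr => l _; rewrite -xr (@Pdig x _ (n + k - 1) px) //.
  have := ltn_ord l; move: lt; clear; lia.
move=> ->.
exists (emb r), (phi (fun i => odd (\sum_(l < k) odd (iter (i + l) Tz (emb r) 1)))).
split; first exact: emb_padic. split; first exact: phi_padic.
split; first by rewrite /emb modn_small.
split.
  symmetry; apply: phi_uniq; first by case: (phi_spec (X k r) n).
  move=> i lt; have [_ ->] := phi_spec (X k r) n => //.
  rewrite /X; congr (odd _); apply: eq_bigr => l _.
  rewrite (Pdig (emb_padic r) (_ : i + l < n + k - 1)) /emb ?modn_small //.
  have := ltn_ord l; move: lt; clear; lia.
move=> m; rewrite Mk_phiinv /phiinv; apply: eq_bigr => i _.
by rewrite phi_dig.
Qed.

Lemma decomp (T : finType) (E : T -> T -> Prop) (P : T -> Prop) (S : pred T) (f : T -> T) :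
  (forall x, P x <-> S x) -> (forall x, S x -> S (f x)) -> {in S &, injective f} ->
  (forall u v, S u -> S v -> (E u v <-> v = f u)) -> induced_disjoint_cycles E P.
Proof.
move=> HP Sf finj HE.
pose g x := if S x then f x else x.
have ginj : injective g.
  move=> x y; rewrite /g; case Sx: (S x); case Sy: (S y) => //.
  - by apply: finj; rewrite ?inE.
  - by move=> E'; move: (Sf x Sx); rewrite E' Sy.
  - by move=> E'; move: (Sf y Sy); rewrite -E' Sx.
have gS x : S (g x) = S x.
  by rewrite /g; case Sx: (S x) => //; apply: Sf.
have iterS i x : S (iter i g x) = S x.
  by elim: i => //= i IH; rewrite gS.
have connS x y : fconnect g x y -> S y = S x.
  by move/iter_findex => <-; rewrite iterS.
have gsym : connect_sym (frel g) := fconnect_sym ginj.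
have nextO r u : u \in orbit g r -> next (orbit g r) u = g u.
  by move=> H; have := next_cycle (cycle_orbit ginj r) H; rewrite /= => /eqP.
pose rs := [seq x <- enum T | S x && (froot g x == x)].
have rsP x : (x \in rs) = S x && (froot g x == x) by rewrite mem_filter mem_enum andbT.
have inroot u : S u -> froot g u \in rs /\ u \in orbit g (froot g u).
  move=> Su; split.
    by rewrite rsP (connS _ _ (connect_root _ u)) Su /= (root_root gsym).
  by rewrite -fconnect_orbit gsym connect_root.
exists (map (orbit g) rs); split.
  apply/allP => c /mapP[x _ ->]; apply/eqP => e; have := in_orbit g x; by rewrite e.
split.
  have : uniq rs by rewrite filter_uniq ?enum_uniq.
  have : forall x, x \in rs -> froot g x = x by move=> x; rewrite rsP => /andP[_ /eqP].
  elim: rs {rsP inroot} => //= r rs IH Hr /andP[rn ur].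
  rewrite cat_uniq orbit_uniq IH ?andbT //; last by move=> x xin; apply: Hr; rewrite inE xin orbT.
  apply/hasPn => y /flattenP[c /mapP[r' r'in ->] yin]; apply/negP => yr.
  rewrite -fconnect_orbit in yin; rewrite -fconnect_orbit in yr.
  have e1 : froot g r = froot g y by apply/(rootP gsym).
  have e2 : froot g r' = froot g y by apply/(rootP gsym).
  rewrite Hr ?inE ?eqxx // in e1; rewrite Hr ?inE ?r'in ?orbT // in e2.
  by move: rn; rewrite e1 -e2 r'in.
split.
  move=> v; split.
    move=> /HP Sv; have [h1 h2] := inroot v Sv; apply/flattenP.
    by exists (orbit g (froot g v)) => //; apply: map_f.
  case/flattenP => c /mapP[r rin ->]; rewrite -fconnect_orbit => /connS Sv; apply/HP; rewrite Sv.
  by move: rin; rewrite rsP => /andP[].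
move=> u v /HP Su /HP Sv; split.
  move=> /(HE _ _ Su Sv) ->; have [h1 h2] := inroot u Su; exists (orbit g (froot g u)); first exact: map_f.
  by rewrite nextO // /g Su.
case=> c /mapP[r rin ->] [uin ->]; apply/(HE _ _ Su); first by rewrite nextO // /g Su Sf.
by rewrite nextO // /g Su.
Qed.

Lemma modD2 x B : 0 < B -> x %% (B * 2) = x %% B + B * odd (x %/ B).
Proof.
move=> B0.
have lt : x %% B + B * odd (x %/ B) < B * 2.
  have := ltn_pmod x B0; case: (odd _); lia.
have e1 := divn_eq x B; have e2 := odd_double_half (x %/ B).
have E : x = (x %/ B)./2 * (B * 2) + (x %% B + B * odd (x %/ B)).
  move: e1 e2; set q := x %/ B; set r := x %% B; set o := odd q; set h := q./2.
  rewrite -!muln2. nia.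
by rewrite {1}E modnMDl modn_small.
Qed.

Lemma two_succ_all t v B : 0 < B -> v < B * 2 -> v %% B = t %% B ->
  v = t %% (B * 2) \/ v = (t + B) %% (B * 2).
Proof.
move=> B0 vlt H.
have e : (t + B) %/ B = (t %/ B).+1 by rewrite divnDr // divnn B0 addn1.
rewrite !modD2 // e modnDr -H /=.
rewrite -{1 3}(modn_small vlt) modD2 //.
by case: (odd (v %/ B)); case: (odd (t %/ B)); [left|right|right|left].
Qed.

Lemma two_succ_neq t B : 0 < B -> t %% (B * 2) != (t + B) %% (B * 2).
Proof.
move=> B0.
have e : (t + B) %/ B = (t %/ B).+1 by rewrite divnDr // divnn B0 addn1.
rewrite !modD2 // e modnDr /=; case: (odd _) => /=; lia.
Qed.

Lemma three a b c B : 0 < B -> a < B * 2 -> b < B * 2 -> c < B * 2 ->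
  a %% B = c %% B -> b %% B = c %% B -> a != b -> c = a \/ c = b.
Proof.
move=> B0 al bl cl ha hb nab.
have [eb|eb] := two_succ_all B0 bl (etrans hb (esym ha)).
  by rewrite eb modn_small // eqxx in nab.
have [ec|ec] := two_succ_all B0 cl (esym ha).
  by left; rewrite ec modn_small.
by right; rewrite ec eb.
Qed.

Lemma Tn_lift r B : Tn (r + B * 2) %% (B * 2) = (Tn r + B) %% (B * 2).
Proof.
rewrite /Tn oddD oddM andbF addbF; case: (odd r).
  have -> : 3 * (r + B * 2) + 1 = (3 * r + 1) + (B * 3) * 2 by lia.
  rewrite -!divn2 divnDr ?dvdn_mull // mulnK //.
  have -> : B * 3 = B + B * 2 by lia.
  by rewrite addnA modnDr.
by rewrite -!divn2 divnDr ?dvdn_mull // mulnK.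
Qed.

Lemma Tn_pos x : 2 <= x -> 0 < Tn x.
Proof.
move=> x2; rewrite /Tn -!divn2; case: (odd x); rewrite divn_gt0 //; lia.
Qed.

Lemma edge_of d x r s : 0 < x -> 0 < Tn x -> x %% d = r %% d -> Tn x %% d = s %% d ->
  gamma_edge d r s.
Proof.
move=> x0 y0 xr ys; case ox: (odd x).
  right; exists x, (Tn x); do 4 (split => //); by rewrite /Tn ox.
left; exists x, (Tn x); do 4 (split => //); by rewrite /Tn ox.
Qed.

Lemma edge_iff M r s : gamma_edge (2 ^ M.+1) r s <-> s %% 2 ^ M = Tn r %% 2 ^ M.
Proof.
rewrite expnSr; have B0 : 0 < 2 ^ M by rewrite expn_gt0.
split.
  have K : forall x y, x %% (2 ^ M * 2) = r %% (2 ^ M * 2) ->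
      y %% (2 ^ M * 2) = s %% (2 ^ M * 2) -> y = Tn x -> s %% 2 ^ M = Tn r %% 2 ^ M.
    move=> x y xr ys ey.
    rewrite -(modn_dvdm s (dvdn_mulr 2 (dvdnn (2 ^ M)))) -ys modn_dvdm ?dvdn_mulr //.
    by rewrite ey; apply: L1.
  case=> [[x [y [_ [_ [xr [ys [ox ey]]]]]]]|[x [y [_ [_ [xr [ys [ox ey]]]]]]]];
    apply: (K x y) => //; rewrite /Tn ?ox ?(negbTE ox) //.
move=> H.
have sl : s %% (2 ^ M * 2) < 2 ^ M * 2 by rewrite ltn_pmod // muln_gt0 B0.
have [e|e] := two_succ_all B0 sl (etrans (modn_dvdm _ (dvdn_mulr _ (dvdnn _))) H).
  apply: (@edge_of _ (r + (2 ^ M * 2) * 2)).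
  - lia.
  - apply: Tn_pos; lia.
  - by rewrite addnC [_ * 2]mulnC modnMDl.
  - by rewrite e; apply: L1; rewrite modnDr.
apply: (@edge_of _ (r + 2 ^ M * 2)).
- lia.
- apply: Tn_pos; lia.
- by rewrite modnDr.
- by rewrite e Tn_lift.
Qed.

Lemma C1 n0 k0 u v : v %% 2 ^ (n0 + k0) = Tn u %% 2 ^ (n0 + k0) ->
  phi (X k0.+1 v) n0.+1 %% 2 ^ n0 = Tn (phi (X k0.+1 u) n0.+1) %% 2 ^ n0.
Proof.
move=> H; apply/QE => i lt.
have [_ Hv] := phi_spec (X k0.+1 v) n0.+1; have [_ Hu] := phi_spec (X k0.+1 u) n0.+1.
rewrite (Hv _ (ltnW lt)) -QS (Hu i.+1 lt) /X.
congr (odd _); apply: eq_bigr => l _; rewrite addSn QS.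
congr nat_of_bool; apply: (proj2 (QE (n0 + k0) v (Tn u)) H (i + l)); have := ltn_ord l; move: lt; clear; lia.
Qed.

Lemma C2a n0 k0 v v' : v < 2 ^ (n0 + k0).+1 -> v' < 2 ^ (n0 + k0).+1 ->
  v %% 2 ^ (n0 + k0) = v' %% 2 ^ (n0 + k0) -> v != v' ->
  phi (X k0.+1 v) n0.+1 != phi (X k0.+1 v') n0.+1.
Proof.
move=> vl vl' H neq.
have QM : Q v (n0 + k0) != Q v' (n0 + k0).
  apply/negP => /eqP e; move/eqP: neq; apply.
  rewrite -(modn_small vl) -(modn_small vl'); apply/QE => i lt.
  rewrite ltnS leq_eqVlt in lt; case/orP: lt => [/eqP -> //| lt].
  exact: (proj2 (QE _ v v') H i lt).
apply/negP => /eqP e; have := congr1 (fun a => Q a n0) e.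
have [_ Hv] := phi_spec (X k0.+1 v) n0.+1; have [_ Hv'] := phi_spec (X k0.+1 v') n0.+1.
rewrite /= Hv // Hv' // /X !big_ord_recr /=.
have -> : \sum_(i < k0) (Q v (n0 + i) : nat) = \sum_(i < k0) (Q v' (n0 + i) : nat).
  apply: eq_bigr => l _; congr nat_of_bool.
  apply: (proj2 (QE _ v v') H); have := ltn_ord l; clear; lia.
rewrite !oddD => /addbI; by move/eqP: QM; case: (Q v _); case: (Q v' _).
Qed.

Lemma C3a n0 k0 u u' : u < 2 ^ (n0 + k0).+1 -> u' < 2 ^ (n0 + k0).+1 ->
  Tn u %% 2 ^ (n0 + k0) = Tn u' %% 2 ^ (n0 + k0) -> u != u' ->
  phi (X k0.+1 u) n0.+1 != phi (X k0.+1 u') n0.+1.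
Proof.
move=> ul ul' H neq.
have od : odd u != odd u'.
  apply/negP => /eqP e; move/eqP: neq; apply.
  rewrite -(modn_small ul) -(modn_small ul'); exact: L2.
apply/negP => /eqP e; have := congr1 (fun a => Q a 0) e.
have [_ Hv] := phi_spec (X k0.+1 u) n0.+1; have [_ Hv'] := phi_spec (X k0.+1 u') n0.+1.
rewrite /= Hv // Hv' // /X !big_ord_recl /=.
have -> : \sum_(i < k0) (Q u (0 + lift ord0 i) : nat) = \sum_(i < k0) (Q u' (0 + lift ord0 i) : nat).
  apply: eq_bigr => l _; congr nat_of_bool; rewrite lift0 add0n !QS.
  apply: (proj2 (QE _ _ _) H); have := ltn_ord l; clear; lia.
rewrite !oddD => /addIb; by move/eqP: od; rewrite !Q0; case: (odd u); case: (odd u').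
Qed.

Theorem mainTheorem20 (n k : nat) (hn : 0 < n) (hk : 0 < k)
  (xs : seq 'I_(2 ^ n)) :
  xs != [::] -> uniq xs ->
  induced_is_cycle (fun r s : 'I_(2 ^ n) => gamma_edge (2 ^ n) r s) xs ->
  induced_disjoint_cycles
    (fun r s : 'I_(2 ^ (n + k - 1)) => gamma_edge (2 ^ (n + k - 1)) r s)
    (fun r : 'I_(2 ^ (n + k - 1)) => exists2 s : 'I_(2 ^ n), s \in xs & Hbar_rel n k r s).
Proof.
move=> _ uxs hcyc.
case: n hn xs uxs hcyc => // n0 _ xs uxs hcyc.
case: k hk => // k0 _.
have eN : n0.+1 + k0.+1 - 1 = (n0 + k0).+1 by lia.
rewrite eN.
pose h (r : nat) := phi (X k0.+1 r) n0.+1.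
have hlt r : h r < 2 ^ n0.+1 := proj1 (phi_spec _ _).
pose hO (r : nat) : 'I_(2 ^ n0.+1) := Ordinal (hlt r).
pose Sb := fun r : 'I_(2 ^ (n0 + k0).+1) => hO r \in xs.
have HP : forall r : 'I_(2 ^ (n0 + k0).+1),
    (exists2 s : 'I_(2 ^ n0.+1), s \in xs & Hbar_rel n0.+1 k0.+1 r s) <-> Sb r.
  move=> r; split.
    case=> s sin H.
    have e : s = hO r.
      apply: val_inj; apply: (proj1 (Hbar_iff _ _ _ _) H) => //; rewrite ?eN //.
    by rewrite /Sb -e.
  move=> Sr; exists (hO r) => //; apply/Hbar_iff => //; rewrite ?eN //.
have B0 : 0 < 2 ^ (n0 + k0) by rewrite expn_gt0.
have pos : 0 < 2 ^ (n0 + k0).+1 by rewrite expn_gt0.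
have cyc1 w : w \in xs -> next xs w \in xs /\ next xs w %% 2 ^ n0 = Tn w %% 2 ^ n0.
  move=> win; have nin : next xs w \in xs by rewrite mem_next.
  by split => //; apply/edge_iff; apply/(hcyc w _ win nin).
have cyc2 w t : w \in xs -> t \in xs -> t %% 2 ^ n0 = Tn w %% 2 ^ n0 -> t = next xs w.
  by move=> win tin H; apply/(hcyc w t win tin); apply/edge_iff.
pose v1 (u : nat) : 'I_(2 ^ (n0 + k0).+1) := Ordinal (ltn_pmod (Tn u) pos).
pose v2 (u : nat) : 'I_(2 ^ (n0 + k0).+1) := Ordinal (ltn_pmod (Tn u + 2 ^ (n0 + k0)) pos).
have v1c u : v1 u %% 2 ^ (n0 + k0) = Tn u %% 2 ^ (n0 + k0).
  by rewrite /= modn_dvdm // dvdn_exp2l.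
have v2c u : v2 u %% 2 ^ (n0 + k0) = Tn u %% 2 ^ (n0 + k0).
  by rewrite /= modn_dvdm ?dvdn_exp2l // modnDr.
have v12 u : val (v1 u) != val (v2 u) by rewrite /= expnSr two_succ_neq.
have vE u (v : 'I_(2 ^ (n0 + k0).+1)) :
    v %% 2 ^ (n0 + k0) = Tn u %% 2 ^ (n0 + k0) -> v = v1 u \/ v = v2 u.
  move=> H; have vl : (v : nat) < 2 ^ (n0 + k0) * 2 by rewrite -expnSr.
  have [e|e] := two_succ_all B0 vl H.
    by left; apply: val_inj => /=; rewrite e expnSr.
  by right; apply: val_inj => /=; rewrite e expnSr.
pose f (u : 'I_(2 ^ (n0 + k0).+1)) := if hO (v1 u) \in xs then v1 u else v2 u.
have fc u : f u %% 2 ^ (n0 + k0) = Tn u %% 2 ^ (n0 + k0).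
  by rewrite /f; case: ifP.
have hC v u : v %% 2 ^ (n0 + k0) = Tn u %% 2 ^ (n0 + k0) ->
    hO v %% 2 ^ n0 = Tn (hO u) %% 2 ^ n0 by move=> H; apply: C1.
have hneq u : hO (v1 u) != hO (v2 u).
  apply/negP => /eqP/(congr1 val) /eqP; apply/negP.
  apply: (C2a (ltn_ord (v1 u)) (ltn_ord (v2 u))); [by rewrite v1c v2c | exact: v12].
have lt2 (a : 'I_(2 ^ n0.+1)) : (a : nat) < 2 ^ n0 * 2 by rewrite -expnSr.
have Hnext u : Sb u -> next xs (hO u) = hO (v1 u) \/ next xs (hO u) = hO (v2 u).
  move=> Su; have [nin nc] := cyc1 _ Su.
  have := three (expn_gt0 2 n0 : 0 < 2 ^ n0) (lt2 (hO (v1 u))) (lt2 (hO (v2 u)))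
    (lt2 (next xs (hO u))).
  rewrite (hC _ u (v1c u)) (hC _ u (v2c u)) nc => /(_ erefl erefl) [].
    by apply/negP => /eqP e; move/eqP: (hneq u); apply; apply: val_inj.
  by move=> e; left; apply: val_inj.
  by move=> e; right; apply: val_inj.
have K1 u : Sb u -> Sb (f u).
  move=> Su; have [nin _] := cyc1 _ Su; rewrite /Sb /f; case: ifP => // notin.
  case: (Hnext u Su) => e; first by rewrite -e nin in notin.
  by rewrite -e.
have K2 u v : Sb u -> Sb v ->
    (gamma_edge (2 ^ (n0 + k0).+1) u v <-> v = f u).
  move=> Su Sv; split; last first.
    by move=> ->; apply/edge_iff; apply: fc.
  move/edge_iff => H.
  have ev : hO v = next xs (hO u) by apply: cyc2 => //; apply: hC.
  rewrite /f; case: ifP => in1.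
    case: (vE u v H) => // e.
    have e1 : hO (v1 u) = next xs (hO u) by apply: cyc2 => //; apply: hC; rewrite v1c.
    by move/eqP: (hneq u); rewrite e1 -ev e.
  case: (vE u v H) => // e; by rewrite /Sb e in1 in Sv.
have K3 : {in Sb &, injective f}.
  move=> u u' Su Su' e; apply/eqP; apply/negPn/negP => neq.
  have : hO u != hO u'.
    apply/negP => /eqP/(congr1 val) /= /eqP; apply/negP; apply: C3a => //.
    by rewrite -fc e fc.
  have Sf := K1 _ Su.
  have e1 : hO (f u) = next xs (hO u) by apply: cyc2 => //; apply: hC; rewrite fc.
  have e2 : hO (f u) = next xs (hO u') by apply: cyc2 => //; apply: hC; rewrite e fc.
  have := prev_next uxs (hO u); rewrite -e1 e2 prev_next // => ->.
  by rewrite eqxx.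
by apply: (@decomp _ _ _ Sb f HP K1 K3 K2).
Qed.
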